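(* Let $(p,\mathcal D,L)$ be a Hadamard triple on $\mathbb R$ with $p>1$, $0\in\mathcal D\subset\{0,1,2,\dots\}$, and $p=\#\mathcal D$. Then $$T_{p,\mathcal D}=[0,1)\setminus\tfrac{1}{\gcd\mathcal D}\mathbb Z .$$
   Context: A Hadamard triple on $\mathbb R$ is a triple $(p,\mathcal D,L)$ with $p>1$ an integer, $\mathcal D,L\subset\mathbb Z$ finite with $\#\mathcal D=\#L$, such that $\frac{1}{\sqrt{\#\mathcal D}}\big[e^{2\pi i d\ell/p}\big]_{\ell\in L,d\in\mathcal D}$ is unitary. For finite $A\subset\mathbb R$, $\widehat{\delta_{cA}}(\xi)=\frac1{\#A}\sum_{a\in A}e^{2\pi i ca\xi}$. $T_{p,D}$ (the Double Points Condition Set) denotes the set of $\xi\in[0,1)$ for which there exist distinct $\ell_1,\ell_2\in\{0,\dots,p-1\}$ with $\widehat{\delta_{p^{-1}D}}(\xi+\ell_i)\ne0$, $i=1,2$. Here $\gcd\mathcal D$ is the greatest common divisor of the elements of $\mathcal D$ (with $\mathcal D\ne\{0\}$). *)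

(* Defs.v *)
From HB Require Import structures.
From mathcomp Require Import all_boot all_order all_algebra.
From mathcomp Require Import all_classical all_reals.
From mathcomp Require Import ereal topology normedtype sequences exp trigo.
From mathcomp Require Import complex.
Unset Printing Implicit Defensive.
Import Order.TTheory GRing.Theory Num.Theory.
Local Open Scope ring_scope.
Local Open Scope complex_scope.

Definition expi (R : realType) (t : R) : R[i] :=
  (cos (2 * pi * t) +i* sin (2 * pi * t))%C.

Arguments expi {R}.

(* The matrix (1/sqrt #D) [ e^{2 pi i d l / p} ]_{l in L, d in D},
   finite sets D, L of integers being represented by duplicate-free lists. *)
Definition hadamard_mx (R : realType) (p : nat) (D L : seq int)
  : 'M[R[i]]_(size L, size D) :=
  \matrix_(a < size L, b < size D)
    (((Num.sqrt ((size D)%:R : R))^-1)%:C *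
      expi ((nth 0 D b * nth 0 L a)%:~R / (p%:R : R))).

Definition unitary_mx (R : realType) (n : nat) (M : 'M[R[i]]_n) : Prop :=
  M *m (map_mx Num.conj M)^T = 1%:M /\ (map_mx Num.conj M)^T *m M = 1%:M.

Definition hadamard_triple (R : realType) (p : nat) (D L : seq int) : Prop :=
  [/\ (1 < p)%N, uniq D, uniq L &
    exists e : size L = size D,
      @unitary_mx R (size D) (castmx (e, erefl) (hadamard_mx R p D L))].

(* Fourier transform of the uniform measure on c A:
   \hat{delta_{cA}}(xi) = (1/#A) sum_{a in A} e^{2 pi i c a xi} *)
Definition ft_delta (R : realType) (c : R) (A : seq int) (xi : R) : R[i] :=
  ((size A)%:R : R[i])^-1 * \sum_(a <- A) expi (c * a%:~R * xi).

Arguments ft_delta {R}.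

Definition Tset (R : realType) (p : nat) (D : seq int) : set R :=
  [set xi | 0 <= xi < 1 /\
     exists l1 l2 : nat, [/\ (l1 < p)%N, (l2 < p)%N, l1 <> l2,
       ft_delta (p%:R^-1) D (xi + l1%:R) != 0 &
       ft_delta (p%:R^-1) D (xi + l2%:R) != 0]].

Definition gcd_seq (D : seq int) : int := foldr gcdz 0 D.

(* Main.v *)
Require Import Defs.
From HB Require Import structures.
From mathcomp Require Import all_boot all_order all_algebra.
From mathcomp Require Import all_classical all_reals.
From mathcomp Require Import ereal topology normedtype sequences exp trigo.
From mathcomp Require Import complex.
From mathcomp Require Import ring lra.
Import Order.TTheory GRing.Theory Num.Theory.
Local Open Scope ring_scope.
Local Open Scope classical_set_scope.


Section E.
Variable R : realType.
Local Open Scope complex_scope.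

Lemma conjE (x : R[i]) : Num.conj x = conjc x.
Proof. by []. Qed.

Lemma expiD (x y : R) : expi (x + y) = expi x * expi y.
Proof.
rewrite /expi mulrDr cosD sinD.
apply/eqP; rewrite eq_complex /=. apply/andP; split; apply/eqP; ring.
Qed.

Lemma expi0 : expi (0:R) = 1.
Proof. by rewrite /expi mulr0 cos0 sin0. Qed.

Lemma expiN (x : R) : expi (- x) = conjc (expi x).
Proof. by rewrite /expi mulrN cosN sinN. Qed.

Lemma expi_add1 (x : R) : expi (x + 1) = expi x.
Proof. by rewrite /expi mulrDr mulr1 !mulr_natl cosD2pi sinD2pi. Qed.

Lemma expiNK (x : R) : expi x * expi (- x) = 1.
Proof. by rewrite -expiD subrr expi0. Qed.

Lemma expi_nat (n : nat) : expi (n%:R : R) = 1.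
Proof. elim: n => [|n IH]; first by rewrite expi0. by rewrite -natr1 expi_add1. Qed.

Lemma expi_int (n : int) : expi (n%:~R : R) = 1.
Proof.
case: n => n; first by rewrite expi_nat.
have := expiNK (n.+1%:R : R). rewrite expi_nat mul1r => H.
by rewrite NegzE mulrNz H.
Qed.

Lemma expi_Dint (x : R) (n : int) : expi (x + n%:~R) = expi x.
Proof. by rewrite expiD expi_int mulr1. Qed.

Lemma expiX (x : R) (j : nat) : expi x ^+ j = expi (j%:R * x).
Proof.
elim: j => [|j IH]; first by rewrite expr0 mul0r expi0.
by rewrite exprS IH -expiD -natr1 mulrDl mul1r addrC.
Qed.

Lemma expi_eq1 (x : R) : expi x = 1 -> exists n : int, x = n%:~R.
Proof.
move=> H; exists (Num.floor x).
set y := x - (Num.floor x)%:~R.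
have Hy : expi y = 1 by rewrite /y -mulrNz expi_Dint.
have y0 : 0 <= y by rewrite /y subr_ge0 Num.Theory.floor_le.
have y1 : y < 1.
  have := Num.Theory.floorD1_gt x; rewrite intrD (_ : (1:int)%:~R = 1 :> R) // /y; lra.
suff : y = 0 by move/eqP; rewrite subr_eq0 => /eqP.
have cosy : cos (2 * pi * y) = 1 by move: Hy; rewrite /expi => -[].
have pi0 := pi_gt0 R.
case: (lerP y (2^-1)) => hy.
  have : 2 * pi * y = 0.
    apply: (@cos_inj R); rewrite ?cos0 // in_itv /=; last by rewrite lexx ltW.
    apply/andP; split; first by rewrite mulr_ge0 // mulr_ge0 // ltW.

    by nra.
  move/eqP; rewrite mulf_eq0 mulf_eq0 pnatr_eq0 /= gt_eqF //= => /eqP //.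
exfalso.
have Hy' : expi (1 - y) = 1.
  rewrite addrC expi_add1 expiN Hy; apply/eqP; rewrite eq_complex /= oppr0 !eqxx //.
have cosy' : cos (2 * pi * (1 - y)) = 1 by move: Hy'; rewrite /expi => -[].
have : 2 * pi * (1 - y) = 0.
  apply: (@cos_inj R); rewrite ?cos0 // in_itv /=; last by rewrite lexx ltW.
  apply/andP; split; nra.
by nra.
Qed.

End E.

Section E2.
Variable R : realType.
Local Open Scope complex_scope.

Lemma geom (p : nat) (j : int) : (0 < p)%N -> ~~ (p%:Z %| j)%Z ->
  \sum_(r < p) expi ((p%:R:R)^-1 * j%:~R * r%:R) = 0.
Proof.
move=> p0 nd. set w := expi ((p%:R:R)^-1 * j%:~R).
have E (r : 'I_p) : expi ((p%:R:R)^-1 * j%:~R * r%:R) = w ^+ r by rewrite expiX mulrC.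
rewrite (eq_bigr _ (fun r _ => E r)).
have pn0 : (p%:R : R) != 0 by rewrite pnatr_eq0 -lt0n.
have wp : w ^+ p = 1 by rewrite /w expiX mulrA mulfV // mul1r expi_int.
have w1 : w != 1.
  apply/eqP => /expi_eq1 [n hn]; apply: (negP nd); apply/dvdzP; exists n.
  apply: (@intr_inj R). rewrite intrM -hn mulrC mulrA pmulrn mulfV //.
  by rewrite mul1r.
have := subrX1 w p; rewrite wp subrr => /esym/eqP; rewrite mulf_eq0 subr_eq0 (negbTE w1) /=.
by move/eqP.
Qed.

End E2.

Lemma gcd_seq_dvd (D : seq int) d : d \in D -> (gcd_seq D %| d)%Z.
Proof.
elim: D => // a D IH; rewrite inE => /orP [/eqP -> | /IH H] /=.
  exact: dvdz_gcdl.
exact: dvdz_trans (dvdz_gcdr _ _) H.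
Qed.

Lemma gcd_seq_bezout (R : realType) (D : seq int) (y : R) :
  (forall d, d \in D -> exists n : int, d%:~R * y = n%:~R) ->
  exists n : int, (gcd_seq D)%:~R * y = n%:~R.
Proof.
elim: D => [|a D IH] H; first by exists 0; rewrite /= mul0r.
have [n' Hn'] : exists n : int, (gcd_seq D)%:~R * y = n%:~R.
  by apply: IH => d Hd; apply: H; rewrite inE Hd orbT.
have [na Hna] := H a (mem_head _ _).
have [u [v Huv]] := Bezoutz a (gcd_seq D).
exists (u * na + v * n'); rewrite /= -Huv intrD !intrM mulrDl -!mulrA Hna Hn'.
by rewrite -!intrM -intrD.
Qed.

Section H3sec.
Local Open Scope complex_scope.
Lemma conj_sexpi (R : realType) (s x : R) :
  Num.conj (s%:C * expi x) = s%:C * expi (- x).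
Proof.
rewrite /expi mulrN cosN sinN; apply/eqP; rewrite eq_complex /=.
by apply/andP; split; apply/eqP; ring.
Qed.
Lemma had_distinct (R : realType) p D L : hadamard_triple R p D L ->
  forall a b, a \in D -> b \in D -> (p%:Z %| a - b)%Z -> a = b.
Proof.
case=> p1 uD uL [e [_ U2]] a b aD bD dv.
case: (eqVneq a b) => // ab; exfalso.
have ia : (index a D < size D)%N by rewrite index_mem.
have ib : (index b D < size D)%N by rewrite index_mem.
pose i := Ordinal ia. pose j := Ordinal ib.
have ij : i != j.
  apply/eqP => /(congr1 val) /= /(congr1 (nth 0 D)); rewrite !nth_index // => hab.
  by rewrite hab eqxx in ab.
move/matrixP: U2 => /(_ i j); rewrite !mxE (negbTE ij) /=.
rewrite (eq_bigr (fun _ => ((Num.sqrt ((size D)%:R : R))^-1 ^+ 2)%:C)); last first.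
  move=> k _; rewrite !mxE !castmxE !mxE /=.
  have cE : forall x : R[i], Num.conj x = conjc x by [].
  rewrite !nth_index // conj_sexpi mulrACA -expiD.
  have pZ : (p%:Z)%:~R = p%:R :> R by [].
  have pn0 : (p%:R : R) != 0 by rewrite pnatr_eq0; case: p p1 {dv pZ}.
  have -> : expi (R:=R) (- ((a * L`_k)%:~R / p%:R) + (b * L`_k)%:~R / p%:R) = 1.
    case/dvdzP: dv => q hq.
    rewrite (_ : a = q * p%:Z + b); last by rewrite -hq subrK.
    rewrite (_ : - _ + _ = (- q * L`_k)%:~R :> R) ?expi_int //.
    rewrite !(intrM, intrD, intrN) pZ; field; exact: pn0.
  by rewrite mulr1 expr2 rmorphM.
rewrite sumr_const card_ord -rmorphMn => -[].
rewrite exprVn sqr_sqrtr ?ler0n // -mulr_natr mulVf //.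
  by move/eqP; rewrite oner_eq0.
by rewrite pnatr_eq0 -(size_map (fun x : int => x)) ; case: (D) aD.
Qed.

End H3sec.
Lemma perm_res (p : nat) (D : seq int) : (0 < p)%N ->
  (forall a b, a \in D -> b \in D -> (p%:Z %| a - b)%Z -> a = b) ->
  uniq D -> size D = p ->
  perm_eq [seq (a %% p%:Z)%Z | a <- D] [seq r%:Z | r <- iota 0 p].
Proof.
move=> p0 H uD sD.
have pn0 : p%:Z != 0 by case: (p) p0.
have U : uniq [seq (a %% p%:Z)%Z | a <- D].
  rewrite map_inj_in_uniq // => a b aD bD hab; apply: H => //.
  apply/dvdzP; exists ((a %/ p%:Z)%Z - (b %/ p%:Z)%Z).
  by rewrite {1}(divz_eq a p%:Z) {1}(divz_eq b p%:Z) hab mulrBl; ring.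
have S : {subset [seq (a %% p%:Z)%Z | a <- D] <= [seq r%:Z | r <- iota 0 p]}.
  move=> x /mapP [a aD ->].
  have h0 := modz_ge0 a pn0. have h1 := ltz_mod a pn0.
  move: h0 h1; case: (a %% p%:Z)%Z => // n _ h1.
  apply/mapP; exists n => //; rewrite mem_iota add0n.
  by move: h1 => /=; rewrite ltz_nat.
have := uniq_min_size U S; rewrite !size_map size_iota sD leqnn => /(_ isT) [_ E].
apply: uniq_perm => //; rewrite map_inj_uniq ?iota_uniq //; by move=> x y [].
Qed.

Lemma sum_res (V : nmodType) (p : nat) (D : seq int) (F : int -> V) : (0 < p)%N ->
  (forall a b, a \in D -> b \in D -> (p%:Z %| a - b)%Z -> a = b) ->
  uniq D -> size D = p ->
  \sum_(a <- D) F (a %% p%:Z)%Z = \sum_(r < p) F r%:Z.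
Proof.
move=> p0 H uD sD.
rewrite -(big_map (fun a => (a %% p%:Z)%Z) xpredT F).
rewrite (perm_big _ (@perm_res p D p0 H uD sD)) big_map.
by rewrite -(big_mkord xpredT (fun r => F r%:Z)) /index_iota subn0.
Qed.

Lemma sumD_zero (R : realType) (p : nat) (D : seq int) (j : int) : (0 < p)%N ->
  (forall a b, a \in D -> b \in D -> (p%:Z %| a - b)%Z -> a = b) ->
  uniq D -> size D = p -> ~~ (p%:Z %| j)%Z ->
  \sum_(a <- D) expi ((p%:R : R)^-1 * a%:~R * j%:~R) = 0.
Proof.
move=> p0 H uD sD nd.
have pn0 : (p%:R : R) != 0 by rewrite pnatr_eq0 -lt0n.
have E a : expi ((p%:R : R)^-1 * a%:~R * j%:~R) =
           expi ((p%:R : R)^-1 * (a %% p%:Z)%Z%:~R * j%:~R).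
  rewrite {1}(divz_eq a p%:Z) intrD intrM mulrDr mulrDl.
  rewrite (_ : _ * (_ * _) * _ = ((a %/ p%:Z)%Z * j)%:~R); first by rewrite addrC expi_Dint.
  rewrite intrM (_ : (p%:Z)%:~R = p%:R :> R) //; field; exact: pn0.
rewrite (eq_bigr _ (fun a _ => E a)).
rewrite (@sum_res _ p D (fun x => expi ((p%:R : R)^-1 * x%:~R * j%:~R)) p0 H uD sD).
rewrite -[RHS](@geom R p j p0 nd); apply: eq_bigr => r _; congr expi.
by rewrite mulrAC.
Qed.

From mathcomp Require Import zify.

Lemma inversion (R : realType) (p : nat) (D : seq int) (xi : R) (d : int) :
  (0 < p)%N ->
  (forall a b, a \in D -> b \in D -> (p%:Z %| a - b)%Z -> a = b) ->
  uniq D -> d \in D ->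
  \sum_(l < p) (\sum_(a <- D) expi ((p%:R : R)^-1 * a%:~R * (xi + l%:R)))
      * expi (- ((p%:R : R)^-1 * d%:~R * l%:R))
  = p%:R * expi ((p%:R : R)^-1 * d%:~R * xi).
Proof.
move=> p0 H uD dD.
set c := (p%:R : R)^-1.
under eq_bigr do rewrite big_distrl /=.
rewrite exchange_big /=.
have E a (l : 'I_p) : expi (c * a%:~R * (xi + l%:R)) * expi (- (c * d%:~R * l%:R))
   = expi (c * a%:~R * xi) * expi (c * (a - d)%:~R * l%:R).
  rewrite -!expiD; congr expi; rewrite intrB; ring.
under eq_bigr do rewrite (eq_bigr _ (fun l _ => E _ l)) -big_distrr /=.
rewrite (bigD1_seq d) //= [X in _ + X]big1_seq ?addr0.
  rewrite subrr (eq_bigr (fun _ => 1)); last by move=> l _; rewrite mulr0 mul0r expi0.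
  by rewrite sumr_const card_ord mulrC -mulr_natr mul1r.
move=> a /andP [ad aD].
rewrite geom ?mulr0 //; apply/negP => hd; move/eqP: ad; apply.
exact: H.
Qed.

Lemma dvd_small (p l l0 : nat) : (l < p)%N -> (l0 < p)%N ->
  (p%:Z %| l%:Z - l0%:Z)%Z -> l = l0.
Proof.
move=> h1 h2 /dvdzP [[n|n] hq].
  case: n hq => [|n] hq; first by move/eqP: hq; rewrite mul0r subr_eq0 => /eqP [].
  nia.
rewrite NegzE in hq; nia.
Qed.

Theorem lemma3p3 (R : realType) (p : nat) (D L : seq int) :
  hadamard_triple R p D L ->
  0 \in D -> all (fun d : int => 0 <= d) D -> p = size D ->
  Tset R p D =
    [set xi : R | 0 <= xi < 1 /\
       ~ exists k : int, xi = k%:~R / (gcd_seq D)%:~R].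
Proof.
move=> HT D0 Dpos pD.
have H := @had_distinct R p D L HT.
case: HT => p1 uD uL _.
have p0 : (0 < p)%N by apply: ltnW.
have sD : size D = p by [].
have pn0 : (p%:R : R) != 0 by rewrite pnatr_eq0 -lt0n.
have pCn0 : (p%:R : R[i]) != 0 by rewrite pnatr_eq0 -lt0n.
set c := (p%:R : R)^-1.
pose S xi (l : nat) := \sum_(a <- D) expi (c * a%:~R * (xi + l%:R)).
have ftE xi (l : nat) : (ft_delta c D (xi + l%:R) != 0) = (S xi l != 0).
  by rewrite /ft_delta mulf_eq0 invr_eq0 sD pnatr_eq0 (gtn_eqF p0).
set g := gcd_seq D.
have gdvd : forall d, d \in D -> (g %| d)%Z by move=> d; apply: gcd_seq_dvd.
have gn0 : g != 0.
  apply/negP => /eqP g0.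
  have sz : (1 < size D)%N by rewrite -pD.
  move: uD sz gdvd; rewrite g0; case: (D) => [|x [|y s]] //= uD _ gd.
  have hy : y \in [:: x, y & s] by rewrite !inE eqxx orbT.
  move: (gd x (mem_head _ _)) (gd y hy); rewrite !dvd0z => /eqP ex /eqP ey.
  by move: uD; rewrite ex ey inE eqxx.
have gRn0 : (g%:~R : R) != 0 by rewrite intr_eq0.
apply/seteqP; split => xi /=.
- move=> [hxi [l1 [l2 [hl1 hl2 l12 n1 n2]]]]; split => // -[k hk].
  have [d dD d1] : exists2 d, d \in D & (d %% p%:Z)%Z = 1.
    have : 1%:Z \in [seq r%:Z | r <- iota 0 p] by apply/mapP; exists 1%N; rewrite ?mem_iota.
    rewrite -(perm_mem (@perm_res p D p0 H uD sD)) => /mapP [d dD hd].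
    by exists d.
  have [t ht] := dvdzP (gdvd d dD).
  pose Q := ((- k * t) %/ p%:Z)%Z.
  have hl0 : (0 <= (- k * t) %% p%:Z)%Z by apply: modz_ge0; case: (p) p0.
  have hl0' : ((- k * t) %% p%:Z < p%:Z)%Z by apply: (ltz_mod (- k * t)); case: (p) p0.
  move: hl0 hl0'; case El0 : ((- k * t) %% p%:Z)%Z => [l0|] // _ hl0p.
  have l0p : (l0 < p)%N by rewrite -ltz_nat.
  have E1 : l0%:Z = - k * t - Q * p%:Z.
    by rewrite -El0 {2}(divz_eq (- k * t) p%:Z) /Q; ring.
  have E2 : t * g = (d %/ p%:Z)%Z * p%:Z + 1 by rewrite -ht -d1 -divz_eq.
  pose m := (- k * (d %/ p%:Z)%Z - Q * g).
  have Em : k + l0%:Z * g = m * p%:Z.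
    rewrite E1 /m.
    have -> : k + (- k * t - Q * p%:Z) * g = k - k * (t * g) - Q * g * p%:Z by ring.
    rewrite E2; ring.
  have hm : (m%:~R : R) = (k%:~R + l0%:R * g%:~R) / p%:R.
    have := congr1 (fun z : int => z%:~R : R) Em => /=.
    rewrite intrD !intrM (_ : (p%:Z)%:~R = p%:R :> R) // (_ : (l0%:Z)%:~R = l0%:R :> R) // => ->.
    by field.
  have Sl : forall l : nat, (l < p)%N -> S xi l != 0 -> l = l0.
    move=> l lp; rewrite /S.
    have -> : \sum_(a <- D) expi (c * a%:~R * (xi + l%:R)) =
              \sum_(a <- D) expi (c * a%:~R * (l%:Z - l0%:Z)%:~R).
      apply: eq_big_seq => a aD.
      have [ta hta] := dvdzP (gdvd a aD).
      rewrite (_ : c * a%:~R * (xi + l%:R) = c * a%:~R * (l%:Z - l0%:Z)%:~R + (ta * m)%:~R).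
        by rewrite expi_Dint.
      rewrite hk hta !intrM hm intrB /c (_ : (l%:Z)%:~R = l%:R :> R) //.
      rewrite (_ : (l0%:Z)%:~R = l0%:R :> R) //; field.
      by apply/andP; split.
    case: (eqVneq l l0) => // nl; rewrite sumD_zero ?eqxx //.
    by apply/negP => /(@dvd_small p l l0 lp l0p) el; rewrite el eqxx in nl.
  move: n1 n2; rewrite !ftE => /(Sl _ hl1) e1 /(Sl _ hl2) e2.
  by apply: l12; rewrite e1 e2.
- move=> [hxi nk]; split => //.
  apply: contrapT => nT.
  have A0 : \sum_(l < p) S xi l = p%:R.
    have := @inversion R p D xi 0 p0 H uD D0.
    rewrite !(mulr0z, mulr0, mul0r, oppr0, expi0, mulr1) => <-.
    by apply: eq_bigr => l _; rewrite !(mulr0z, mulr0, mul0r, oppr0, expi0, mulr1).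
  have [l0 hl0] : exists l0 : 'I_p, S xi l0 != 0.
    case: (pselect (exists l0 : 'I_p, S xi l0 != 0)) => // nex.
    exfalso; move: A0; rewrite big1 => [h|l _]; first by move: pCn0; rewrite -h eqxx.
    by apply/eqP; apply: contraT => hl; exfalso; apply: nex; exists l.
  have oth : forall l : 'I_p, l != l0 -> S xi l = 0.
    move=> l hl; apply/eqP; apply: contraT => hSl; exfalso; apply: nT.
    exists l0, l; split => //; first by apply/eqP; rewrite eq_sym.
      by rewrite ftE.
    by rewrite ftE.
  have single F : \sum_(l < p) S xi l * F l = S xi l0 * F l0.
    rewrite (bigD1 l0) //= big1 ?addr0 // => l hl; by rewrite oth ?mul0r.
  have Sl0 : S xi l0 = p%:R.
    have := single (fun _ => 1); rewrite mulr1 => <-; rewrite -A0.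
    by apply: eq_bigr => l _; rewrite mulr1.
  have hd : forall d, d \in D -> exists n : int, d%:~R * (c * (xi + l0%:R)) = n%:~R.
    move=> d dD.
    have Ad := @inversion R p D xi d p0 H uD dD.
    rewrite (single (fun l : 'I_p => expi (- (c * d%:~R * l%:R)))) Sl0 in Ad.
    move/(mulfI pCn0): Ad => Ad.
    have [n hn] : exists n : int, c * d%:~R * (xi + l0%:R) = n%:~R.
      apply: expi_eq1.
      by rewrite mulrDr expiD -Ad mulrC expiNK.
    by exists n; rewrite -hn; ring.
  have [N hN] := @gcd_seq_bezout R D _ hd.
  apply: nk; exists (p%:Z * N - g * l0%:Z).
  have hN' : g%:~R * (xi + l0%:R) = p%:R * N%:~R :> R.
    by rewrite -hN /c; field.
  rewrite intrB !intrM (_ : (p%:Z)%:~R = p%:R :> R) // (_ : (l0%:Z)%:~R = l0%:R :> R) //.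
  by rewrite -hN'; field.
Qed.
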